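(* Let $n\in\{3,4,5\}$ and let $\overline D_n:=\langle a,b\mid aba=bab,\ ab^2a=b^{n-2}\rangle$. Then $a^{2n}=\mathbf 1$ in $\overline D_n$. More precisely: for $n=3$, $a^3=(ab)^{-3}=(ab)^3$; for $n=4$, $a^4=a^{-4}$; for $n=5$, $a^5=(ba^{-1})^5$, $b^5=(ab^{-1})^5$ and $a^{10}=a^5b^5=\mathbf 1$. *)

(* Defs.v *)
Record Group (T : Type) : Type := {
  gmul : T -> T -> T;
  gone : T;
  ginv : T -> T;
  gmulA : forall x y z, gmul x (gmul y z) = gmul (gmul x y) z;
  gmul1 : forall x, gmul gone x = x;
  gmulV : forall x, gmul (ginv x) x = gone
}.

Arguments gmul {T} _ _ _.
Arguments gone {T} _.
Arguments ginv {T} _ _.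

Definition gpow {T : Type} (G : Group T) (x : T) (k : nat) : T :=
  Nat.iter k (gmul G x) (gone G).

Definition Dbar_rel {T : Type} (G : Group T) (n : nat) (a b : T) : Prop :=
  gmul G (gmul G a b) a = gmul G (gmul G b a) b /\
  gmul G (gmul G (gmul G a b) b) a = gpow G b (n - 2).

(* Main.v *)
Require Import Defs.
From Stdlib Require Import List Bool Arith.
Import ListNotations.


Lemma mulV_r {T} (G : Group T) x : gmul G x (ginv G x) = gone G.
Proof.
  set (y := gmul G x (ginv G x)).
  assert (Hyy : gmul G y y = y).
  { unfold y. rewrite <- gmulA. rewrite (gmulA _ G (ginv G x) x). rewrite gmulV, gmul1. reflexivity. }
  rewrite <- (gmul1 _ G y). rewrite <- (gmulV _ G y) at 1.
  rewrite <- gmulA. rewrite Hyy. apply gmulV.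
Qed.

Lemma mul1_r {T} (G : Group T) x : gmul G x (gone G) = x.
Proof. rewrite <- (gmulV _ G x), gmulA, mulV_r, gmul1. reflexivity. Qed.

Definition lt_ {T} (G : Group T) (a b : T) (l : nat) : T :=
  match l with 0 => a | 1 => ginv G a | 2 => b | _ => ginv G b end.

Fixpoint ev {T} (G : Group T) (a b : T) (w : list nat) : T :=
  match w with [] => gone G | l :: w' => gmul G (lt_ G a b l) (ev G a b w') end.

Lemma ev_app {T} (G : Group T) a b u v :
  ev G a b (u ++ v) = gmul G (ev G a b u) (ev G a b v).
Proof.
  induction u as [|x u IH]; simpl. now rewrite gmul1.
  now rewrite IH, gmulA.
Qed.

Lemma gpow_ev {T} (G : Group T) a b u k :
  gpow G (ev G a b u) k = ev G a b (concat (repeat u k)).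
Proof.
  induction k as [|k IH]; simpl. reflexivity.
  rewrite ev_app. unfold gpow in *. simpl. now rewrite IH.
Qed.

Fixpoint wbeq (u v : list nat) : bool :=
  match u, v with
  | [], [] => true
  | x :: u', y :: v' => Nat.eqb x y && wbeq u' v'
  | _, _ => false end.

Lemma wbeq_eq u v : wbeq u v = true -> u = v.
Proof.
  revert v; induction u as [|x u IH]; destruct v as [|y v]; simpl; try discriminate; auto.
  intros H; apply andb_prop in H as [H1 H2]. apply Nat.eqb_eq in H1. subst. f_equal; auto.
Qed.

Definition step := (nat * bool * nat)%type.

Definition apply_step (env : list (list nat * list nat)) (s : step) (w : list nat)
  : option (list nat) :=
  let '(j, d, i) := s in
  match nth_error env j with
  | None => None
  | Some (l, r) =>
    let l' := if d then l else r in
    let r' := if d then r else l in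
    if wbeq (firstn (length l') (skipn i w)) l'
    then Some (firstn i w ++ r' ++ skipn (i + length l') w) else None
  end.

Fixpoint run env (ss : list step) (w : list nat) : option (list nat) :=
  match ss with
  | [] => Some w
  | s :: ss' => match apply_step env s w with None => None | Some w' => run env ss' w' end
  end.

Fixpoint check env (rs : list (list nat * list nat * list step)) : bool :=
  match rs with
  | [] => true
  | (l, r, ss) :: rs' =>
    match run env ss l with
    | Some r0 => wbeq r0 r && check (env ++ [(l, r)]) rs'
    | None => false end
  end.

Definition Valid {T} (G : Group T) a b env :=
  forall j l r, nth_error env j = Some (l, r) -> ev G a b l = ev G a b r.

Lemma apply_sound {T} (G : Group T) a b env s w w' :
  Valid G a b env -> apply_step env s w = Some w' -> ev G a b w' = ev G a b w.
Proof.
  intros HV. destruct s as [[j d] i]. simpl.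
  destruct (nth_error env j) as [[l r]|] eqn:E; [|discriminate].
  set (l' := if d then l else r). set (r' := if d then r else l).
  assert (Hlr : ev G a b l' = ev G a b r').
  { unfold l', r'. destruct d; [|symmetry]; eapply HV; eauto. }
  destruct (wbeq _ _) eqn:B; [|discriminate].
  apply wbeq_eq in B. intros H; injection H as <-.
  transitivity (ev G a b (firstn i w ++ l' ++ skipn (length l') (skipn i w))).
  - rewrite !ev_app, Hlr, skipn_skipn, (Nat.add_comm i). reflexivity.
  - assert (E2 : l' ++ skipn (length l') (skipn i w) = skipn i w).
    { etransitivity; [|apply (firstn_skipn (length l'))]. now rewrite B. }
    rewrite E2, firstn_skipn. reflexivity.
Qed.

Lemma run_sound {T} (G : Group T) a b env ss w w' :
  Valid G a b env -> run env ss w = Some w' -> ev G a b w' = ev G a b w.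
Proof.
  intros HV. revert w. induction ss as [|s ss IH]; simpl; intros w H.
  - now injection H as <-.
  - destruct (apply_step env s w) eqn:E; [|discriminate].
    rewrite (IH _ H). eapply apply_sound; eauto.
Qed.

Lemma check_sound {T} (G : Group T) a b rs : forall env,
  Valid G a b env -> check env rs = true ->
  Valid G a b (env ++ map (fun x => let '(l, r, _) := x in (l, r)) rs).
Proof.
  induction rs as [|[[l r] ss] rs IH]; simpl; intros env HV Hc.
  - now rewrite app_nil_r.
  - destruct (run env ss l) as [r0|] eqn:E; [|discriminate].
    apply andb_prop in Hc as [H1 H2]. apply wbeq_eq in H1. subst r0.
    replace (env ++ (l, r) :: _) with ((env ++ [(l, r)]) ++
      map (fun x => let '(l, r, _) := x in (l, r)) rs) by now rewrite <- app_assoc.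
    apply IH; auto.
    intros j l0 r0 Hj. destruct (Nat.lt_ge_cases j (length env)).
    + rewrite nth_error_app1 in Hj by auto. eauto.
    + rewrite nth_error_app2 in Hj by auto. destruct (j - length env) as [|k]; simpl in Hj.
      * injection Hj as <- <-. symmetry. eapply run_sound; eauto.
      * destruct k; discriminate.
Qed.

Definition base3 : list (list nat * list nat) := [([0;1],[]); ([1;0],[]); ([2;3],[]); ([3;2],[]); ([0;2;0],[2;0;2]); ([0;2;2;0],[2])].
Definition rules3 : list (list nat * list nat * list step) := [
([2;0;2],[0;2;0],[(4,false,0)]);
([2;2;0],[1;2],[(1,false,0);(5,true,1)]);
([3;0;2;0],[0;2],[(6,false,1);(3,true,0)]);
([0;2;0;3],[2;0],[(6,false,0);(2,true,2)]);
([2;0;0;2;0],[0;2;0;0;2],[(6,false,2);(6,true,0)]);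
([2;0;3],[1;2;0],[(1,false,0);(9,true,1)]);
([3;1;2],[2;0],[(7,false,1);(3,true,0)]);
([0;0;2;0;0],[2;2],[(6,false,1);(6,false,0);(7,true,2);(0,true,1)]);
([1;2;1],[2;2],[(7,false,0);(0,true,2)]);
([0;2;0;0],[1;2;2],[(6,false,0);(6,false,1);(7,true,0)]);
([3;0;2],[0;2;1],[(0,false,3);(8,true,0)]);
([1;2;2;2;1],[2;0;0;2],[(15,false,0);(10,false,0);(0,true,4)]);
([2;0;0;0;2;0],[1;2;2;2;2],[(6,false,3);(10,true,0);(15,true,0)]);
([2;0;0;0;0],[0;0;0;2;0],[(1,false,0);(6,false,1);(6,false,2);(15,false,0);(6,false,4);(10,false,0);(10,true,3);(15,true,3);(0,true,2);(6,true,0);(6,true,1);(6,true,2)]);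
([0;2;2],[2;1],[(14,false,1);(0,true,0)]);
([2;2;2;1],[1;2;2;2],[(0,false,0);(17,true,1);(15,true,0)]);
([1;1;2;2],[2;0;0],[(15,false,1);(1,true,0)]);
([2;0;0],[0;3],[(12,false,0);(11,false,1);(3,true,0)]);
([0;0;3;3],[1;2],[(23,false,1);(6,false,0);(11,true,2);(0,true,1);(7,true,0)]);
([2;1;2;0],[1],[(11,false,1);(7,true,0);(2,true,1)]);
([1;2;2],[0;0;3],[(0,false,2);(11,false,0);(12,true,2);(6,true,0);(23,true,1)]);
([1;2;0],[3;1],[(11,false,0);(12,false,0);(2,true,2)]);
([3;1;1;2],[0;0;3],[(7,false,2);(12,true,0);(6,true,0);(23,true,1)]);
([3;1;3;1],[0;3;3],[(27,false,2);(11,false,2);(12,true,0);(23,true,0)]);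
([0;2;1;3],[3;0],[(16,false,0);(2,true,2)]);
([3;0;0;2;0],[2;1],[(6,false,2);(16,true,0);(1,true,2);(20,true,0)]);
([0;0;0;3],[2;2],[(26,false,1);(0,true,0)]);
([0;3;1],[2;0],[(27,false,1);(0,true,0)]);
([1;1;2],[0;3;3],[(24,false,1);(1,true,0)]);
([2;1;3],[1;3;0],[(1,false,0);(30,true,1)]);
([0;0;2;0],[2;2;1],[(2,false,0);(31,true,1)]);
([3;0;3],[0;0],[(23,false,1);(3,true,0)]);
([2;2;2;2],[0;0;0;2],[(0,false,1);(21,false,2);(6,true,0);(6,true,1);(6,true,2);(0,true,4)]);
([0;0;3;0],[0;3;3],[(23,false,1);(6,false,0);(23,true,2);(23,true,0)]);
([2;2;1;2],[1;1;3;1],[(24,false,2);(7,true,0);(11,true,1);(11,true,2);(27,true,2)]);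
([0;3;3;3],[1;1],[(23,false,0);(29,false,2);(11,true,0);(0,true,2);(2,true,1)]);
([0;0;2],[3;0],[(0,false,3);(6,false,1);(6,false,0);(12,false,0);(21,true,2);(26,true,2);(1,true,1);(3,true,2)]);
([0;3;0],[3;3],[(23,false,0);(12,false,0);(23,true,2);(1,true,1)]);
([3;0;0;3],[0;2;0],[(26,false,1);(12,true,0);(6,true,0)]);
([3;3;1],[0;3],[(27,false,1);(12,true,0);(23,true,0)]);
([2;1;2],[1;1],[(7,false,1);(14,false,0);(27,true,2);(2,true,1)]);
([1;3;0],[0;2],[(35,false,0);(20,false,0);(2,true,2)]);
([0;2;1],[1;3],[(20,false,1);(3,false,2);(26,false,0);(21,false,0);(26,true,3);(7,true,1);(11,true,2);(27,true,2);(35,true,0);(0,true,2)]);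
([3;0;0],[2;2;1],[(42,false,0);(12,false,2);(26,false,0);(7,false,3);(21,false,0);(27,true,3);(2,true,2)]);
([2;2;2],[0;0;0],[(14,false,0);(24,false,0);(12,true,3);(3,true,2)]);
([0;0;0;0],[1;1],[(37,false,2);(26,false,0);(11,true,2);(14,true,0);(7,true,1);(46,true,0)]);
([0;3;3;0],[1;3;1],[(43,false,1);(26,false,0);(23,true,2);(11,true,1);(27,true,1)]);
([3;1;1],[1;2],[(27,false,0);(0,true,2)]);
([3;1;3],[1;3;1],[(27,false,0);(11,true,1);(27,true,1)]);
([3;3;3],[0;0;0],[(1,false,1);(27,false,0);(24,true,2);(14,true,0);(50,true,0)]);
([1;3;3],[3;0],[(43,false,1);(1,true,0)]);
([1;1;3],[2;1],[(48,false,1);(1,true,0)]);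
([1;1;1],[0;0;0],[(51,false,1);(1,true,0)]);
([3;3;0],[2;1;1],[(1,false,0);(52,true,1);(57,true,0)]);
([2;2;1;1],[3;0],[(51,false,2);(7,true,0);(23,true,1);(1,true,0)]);
([0;0;0;0;0;0],[],[(51,true,0);(1,true,1);(1,true,0)]);
([0;0;0;0;2;0;2;0;2],[],[(6,true,4);(23,true,5);(3,true,6);(51,true,0);(1,true,1);(1,true,0)]);
([0;2;0;2;0;2;0;2;0;2;0;2],[],[(6,true,1);(6,true,5);(6,true,9);(23,true,2);(16,true,3);(1,true,5);(23,true,4);(3,true,5);(51,true,0);(1,true,1);(1,true,0)])].
Definition base4 : list (list nat * list nat) := [([0;1],[]); ([1;0],[]); ([2;3],[]); ([3;2],[]); ([0;2;0],[2;0;2]); ([0;2;2;0],[2;2])].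
Definition rules4 : list (list nat * list nat * list step) := [
([2;0;2],[0;2;0],[(4,false,0)]);
([2;2;0],[1;2;2],[(1,false,0);(5,true,1)]);
([3;0;2;0],[0;2],[(6,false,1);(3,true,0)]);
([0;2;0;3],[2;0],[(6,false,0);(2,true,2)]);
([2;0;0;2;0],[0;2;0;0;2],[(6,false,2);(6,true,0)]);
([2;0;3],[1;2;0],[(1,false,0);(9,true,1)]);
([3;1;2;2],[2;0],[(7,false,1);(3,true,0)]);
([0;0;2;0;0],[2;2;2],[(6,false,1);(6,false,0);(7,true,2);(0,true,1)]);
([1;2;2;1],[2;2],[(7,false,0);(0,true,2)]);
([1;2;2;2],[0;2;0;0],[(7,false,0);(6,true,1);(6,true,0)]);
([0;2;0;0;0;2],[2;0;0;0],[(6,false,0);(10,false,1);(7,true,0);(6,true,2);(6,true,1);(1,true,0)]);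
([3;0;2],[0;2;1],[(0,false,3);(8,true,0)]);
([0;2;0;0;2;1],[2;0;0;2],[(10,false,0);(0,true,4)]);
([2;0;0;0;2;0],[0;2;0;0;2;2],[(6,false,3);(10,true,0)]);
([2;2;1],[0;2;2],[(0,false,0);(14,true,1)]);
([2;0;0;0;2],[1;2;0;0;0],[(1,false,0);(16,true,1)]);
([2;0;0;2;1],[1;2;0;0;2],[(1,false,0);(18,true,1)]);
([3;1;2;0],[0;3],[(11,false,1);(3,true,0)]);
([0;2;0;0;3],[1;2;2],[(6,false,0);(11,true,2);(0,true,1);(7,true,0)]);
([2;1;2;0],[1;2],[(11,false,1);(7,true,0);(2,true,2)]);
([2;2;2;2;2],[2;0;0;0;0],[(13,false,2);(7,true,0);(6,true,2);(6,true,1);(1,true,0)]);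
([2;0;0;2;2;2;2],[0;0;2;2;2],[(13,false,4);(10,true,0);(6,true,4);(13,true,3);(6,true,1);(6,true,2);(6,true,3);(13,true,2)]);
([3;1;2],[1;2;0],[(2,false,3);(12,true,0);(11,true,0)]);
([0;2;0;0;0;0;0],[0;0;0;0;0;2;0],[(6,false,0);(6,false,1);(6,false,2);(13,false,0);(13,true,4);(6,true,2);(6,true,3);(6,true,4)]);
([1;2;1;2;2],[0;2;0;0;0],[(7,false,2);(15,true,0)]);
([0;2;0;0;0;0;2;0],[2;0;0;0;0;2],[(15,false,0);(10,true,3);(6,true,2);(6,true,1);(1,true,0)]);
([0;2;0;0;0;3],[2;1;2;2],[(15,false,0);(11,true,3);(20,true,1);(1,true,0);(7,true,1)]);
([0;2;1;3],[3;0],[(17,false,0);(2,true,2)]);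
([3;0;0;2;0],[0;2;2],[(6,false,2);(17,true,0);(1,true,2)]);
([2;0;0;3],[1;1;2;2],[(1,false,0);(24,true,1)]);
([2;0;0;0;0;0],[0;0;0;0;2;0],[(1,false,0);(29,true,1);(1,true,0)]);
([2;0;0;0;0;2;0],[1;2;0;0;0;0;2],[(1,false,0);(31,true,1)]);
([2;0;0;0;3],[0;2;0;0;0],[(1,false,0);(32,true,1);(30,true,0)]);
([2;1;3],[1;3;0],[(1,false,0);(33,true,1)]);
([0;2;1;2],[2;1],[(17,false,0);(20,false,1);(3,true,0)]);
([1;2;0;0;0;0],[0;0;0;2],[(28,false,0);(21,false,1);(3,true,0)]);
([1;1;2;0;0;0],[0;0;2;1],[(21,false,1);(28,false,0);(22,false,1);(3,true,0)]);
([2;2;2;2],[0;0;0;0],[(3,false,0);(26,true,1);(3,true,0)]);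
([2;0;0;2;2],[0;0;2],[(20,false,2);(6,true,0);(6,true,1);(0,true,3)]);
([0;2;0;0;0;0;2],[1;1;1;2;2],[(6,false,0);(21,true,2);(0,true,1);(7,true,0);(7,true,1);(7,true,2)]);
([0;0;0;0;0;0;2;0],[2;1;1;1;2;2],[(6,false,5);(36,false,1);(15,false,0);(21,true,3);(20,true,1);(1,true,0);(7,true,1);(7,true,2);(7,true,3)]);
([3;0;0;2;2],[2;1;1],[(20,false,2);(17,true,0);(40,true,0)]);
([0;2;0;0;2],[0;0;0],[(1,false,2);(17,false,0);(21,true,2);(0,true,1);(3,true,0)]);
([0;2;1;1;2;0],[],[(17,false,0);(25,true,2);(0,true,1);(3,true,0)]);
([0;2;0;0;0;0],[0;0;0;0;0;2],[(6,false,0);(6,false,1);(15,false,2);(20,true,0);(43,true,1)]);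
([2;0;0;0;0;2;2],[1;1;2;0;0],[(20,false,4);(21,true,0);(21,true,1);(0,true,5)]);
([2;0;0;0;0],[0;0;0;0;2],[(0,false,0);(21,false,1);(6,false,4);(10,false,0);(0,false,3);(22,false,4);(21,true,0);(36,true,1);(1,true,0);(6,true,3);(0,true,5)]);
([2;1;2],[1;2;1],[(40,false,0);(7,false,2);(13,false,1);(6,false,2);(6,false,1);(6,false,0);(13,false,2);(6,false,3);(30,false,4);(22,true,0);(20,true,4);(21,true,1);(21,true,2);(21,true,3);(21,true,4);(42,true,3);(1,true,2);(1,true,1)]);
([1;1;2;0],[3;1],[(11,false,1);(28,false,0);(2,true,2)]);
([1;2;0;0;2],[0],[(28,false,0);(6,true,2);(1,true,1);(3,true,0)]);
([3;1;1;2;2],[2;0;0],[(7,false,2);(28,true,0);(6,true,1);(1,true,0)]);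
([1;1;1;2;2],[3;3;1],[(35,false,1);(28,false,0);(11,true,2);(54,true,1)]);
([0;0;0;2;2],[3;3;0],[(1,false,0);(52,false,1);(28,false,0);(21,true,2);(54,true,1);(1,true,2)]);
([3;0;0;2],[0;0;2;2],[(0,false,4);(34,true,0);(20,true,1)]);
([1;2;0],[0;3;1],[(0,false,0);(54,true,1)]);
([1;1;2;2],[0;3;3;1],[(0,false,0);(57,true,1)]);
([0;0;0;0;0;2;0],[1;3;1],[(1,false,0);(46,true,1);(61,true,3);(1,true,2);(2,true,1)]);
([2;0;0;2],[0;0],[(1,false,0);(48,true,1);(1,true,0)]);
([1;3;3;0],[0;0;2;2],[(58,false,1);(1,true,0)]);
([3;0;3;3;1],[0;0;3],[(61,false,1);(35,false,1);(3,true,0)]);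
([0;2;0;0],[0;0;0;3],[(1,false,2);(17,false,0);(38,false,1);(3,true,0)]);
([3;1;3;0],[1;3],[(39,false,1);(3,true,0)]);
([3;0;0;0;0],[2;2;2],[(43,false,1);(3,true,0)]);
([0;0;0;0;3;0],[1;1;2;1],[(66,false,1);(38,false,1);(6,false,0);(35,true,2);(0,true,1);(53,true,0);(53,true,1)]);
([0;0;0;0;0;2],[1;1;1;2],[(52,false,1);(6,false,0);(38,false,1);(7,true,0);(7,true,1);(7,true,2);(2,true,4)]);
([1;3;3;1],[0;3;3;0],[(1,false,1);(61,false,2);(7,false,3);(7,false,2);(7,false,1);(7,false,0);(52,true,1);(52,true,0);(58,true,1)]);
([0;0;0;0;0;0;0;3],[1;3],[(66,false,4);(52,false,1);(15,false,0);(52,true,3);(7,true,1);(7,true,2);(7,true,3);(6,true,5);(6,true,4);(1,true,3);(60,true,2);(1,true,1);(1,true,2)]);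
([0;2;1;1;3],[3;3;0],[(17,false,0);(39,true,2);(0,true,1)]);
([0;2;1;1;2],[1],[(17,false,0);(53,true,2);(0,true,1);(3,true,0)]);
([1;3;0;0],[0;2],[(39,false,0);(39,false,1);(20,true,0);(2,true,2)]);
([1;2;1;1],[0;2;2;2],[(53,false,0);(53,false,1);(20,true,0)]);
([1;1;3;0],[2;1],[(1,false,3);(1,false,2);(60,false,3);(21,false,3);(21,false,2);(21,false,1);(21,false,0);(43,true,4);(52,true,0);(66,true,3);(69,true,2);(0,true,1);(0,true,0)]);
([3;3;3;1],[2;0;0;0],[(1,false,1);(61,false,2);(35,false,2);(28,true,0);(38,true,1);(1,true,0)]);
([3;0;0;0],[0;0;2;0],[(1,false,1);(43,false,2);(28,true,0);(6,true,1);(1,true,0);(6,true,0);(6,true,1)]);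
([3;1;1;2;1],[1;2;2],[(53,false,2);(28,true,0);(0,true,2)]);
([0;0;2;1;1],[3],[(17,false,1);(17,false,2);(58,false,1);(52,false,0);(59,false,3);(35,true,0);(7,true,2);(6,true,4);(6,true,3);(1,true,2);(60,true,1);(1,true,0);(1,true,1)]);
([0;0;0;0;3],[2;2;2],[(43,false,0);(2,true,3)]);
([0;0;0;0;2;1],[2;0;0;0],[(43,false,0);(20,true,3);(6,true,2);(6,true,1);(6,true,0);(21,true,1);(0,true,0)]);
([1;3;0;3;1],[3],[(39,false,0);(1,false,2);(61,false,3);(7,false,4);(7,false,3);(7,false,2);(7,false,1);(43,false,3);(43,true,0);(58,true,1);(17,true,2);(17,true,1);(81,true,0)]);
([0;0;0;0;0;0;0;0],[],[(43,false,0);(52,true,3);(7,true,1);(7,true,2);(7,true,3);(6,true,5);(6,true,4);(1,true,3);(60,true,2);(1,true,1);(1,true,2);(2,true,0)]);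
([1;1;1;2;1],[0;0;0;3;0],[(53,false,2);(53,false,1);(53,false,0);(15,true,1);(6,true,0);(66,true,0)]);
([2;1;1;2;1],[0;0;0;0;0],[(53,false,2);(53,true,0);(76,true,0);(43,true,1)]);
([3;3;0;3],[0;0;0;2],[(58,false,0);(2,true,4)]);
([3;3;0;0],[0;0;2;2],[(58,false,0);(7,true,3);(0,true,2)]);
([0;2;1;1;1],[1;3;1],[(17,false,0);(17,false,1);(58,false,0);(20,true,4);(6,true,3);(6,true,4);(70,true,0);(60,true,2);(1,true,1)]);
([0;3;3;0],[3;3],[(58,false,1);(20,false,3);(58,true,0);(0,true,2)]);
([0;0;3;0;0],[3;3;3],[(0,false,2);(39,false,3);(39,false,4);(58,true,0);(0,true,2)]);
([0;0;0;0;0;0;0],[1],[(43,false,3);(58,true,0);(17,true,1);(17,true,0);(74,true,0)]);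
([3;0;0],[0;0;2],[(2,false,3);(59,true,0);(2,true,3)]);
([0;0;3;1],[2;0],[(60,false,1);(0,true,0)]);
([0;0;3;3;1],[1;2;2],[(61,false,1);(0,true,0)]);
([3;3;1],[0;3;3],[(0,false,0);(71,true,1);(91,true,1)]);
([0;0;2;2;2],[2;1;1],[(76,false,1);(0,true,0)]);
([1;3;0],[0;2;1],[(0,false,0);(77,true,1)]);
([2;0;0],[0;0;3],[(1,false,0);(66,true,1);(1,true,0)]);
([1;1;1;1;2],[0;0;0;0;2],[(70,false,1);(1,true,0)]);
([2;1;1;3],[0;0;2;2],[(1,false,0);(73,true,1);(64,true,0)]);
([2;1;1;2],[1;1],[(1,false,0);(74,true,1)]);
([0;2;1;1],[1;3],[(1,false,0);(81,true,1)]);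
([0;0;0;2;1],[0;3;0],[(1,false,0);(83,true,1);(60,true,0);(1,true,2)]);
([3;3;0],[1;3;3],[(1,false,0);(91,true,1)]);
([0;0;0;0;0;0],[1;1],[(1,false,0);(93,true,1)]);
([3;0;3;1],[0;3],[(60,false,1);(28,true,0);(60,true,0);(1,true,2)]);
([0;3;1;1],[1;2],[(60,false,0);(0,true,2)]);
([0;3;1;3],[3;1],[(60,false,0);(11,true,1);(60,true,1);(1,true,0)]);
([0;0;3;3;3],[1;1;2],[(97,false,1);(61,false,0);(2,true,3)]);
([1;1;1;2],[0;3;3;3],[(1,false,4);(53,false,2);(11,false,3);(61,true,0);(1,true,3)]);
([0;0;0;3;3],[1;2;2],[(97,false,2);(97,false,1);(61,false,0);(20,true,2);(1,true,1)]);
([0;0;0;0;0],[1;1;1],[(2,false,5);(70,true,0);(2,true,3)]);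
([3;1;1;2],[0;0;3;3],[(1,false,4);(80,true,0);(7,true,1);(61,true,0);(97,true,1)]);
([0;0;2;1],[3;0],[(94,false,0);(0,true,2)]);
([0;0;0;0;2],[3;3;3],[(3,false,4);(100,false,2);(94,false,0);(58,true,2);(106,true,2);(0,true,1)]);
([2;1;1],[1;1;3],[(1,false,0);(104,true,1)]);
([3;1;1],[1;1;2],[(1,false,0);(109,true,1)]);
([3;1;3],[1;3;1],[(1,false,0);(110,true,1)]);
([1;1;1;1],[0;0;0;0],[(114,false,1);(1,true,0)]);
([1;3;3;3],[0;0;0;2],[(117,false,1);(1,true,0)]);
([0;0;3;0;3],[0;0;0;3;0],[(100,false,0);(100,false,2);(6,true,0);(100,true,1)]);
([3;0;3],[0;3;0],[(1,false,1);(100,false,2);(28,true,0);(60,true,0);(1,true,2)]);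
([0;3;3;3;3],[1;1;1],[(1,false,2);(60,false,0);(111,true,2);(118,true,1);(3,true,3)]);
([1;1;1;3;1],[0;0;0;2;0],[(118,false,1);(114,false,2);(60,true,0);(1,true,2);(94,true,1)]);
([3;3;3;3],[0;0;0;0],[(117,false,1);(94,true,0);(100,true,2);(3,true,4)]);
([1;1;3;3],[0;0;2;2],[(118,false,0);(98,false,0);(2,true,4)]);
([1;1;1;3],[0;2;2;2],[(114,false,0);(82,true,1)]);
([0;0;0;0;0;0;0;0],[],[(114,true,0);(1,true,2);(1,true,1);(1,true,0)])].
Definition base5 : list (list nat * list nat) := [([0;1],[]); ([1;0],[]); ([2;3],[]); ([3;2],[]); ([0;2;0],[2;0;2]); ([0;2;2;0],[2;2;2])].
Definition rules5 : list (list nat * list nat * list step) := [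
([2;0;2],[0;2;0],[(4,false,0)]);
([1;2;2;2],[2;2;0],[(5,false,1);(1,true,0)]);
([3;0;2;0],[0;2],[(6,false,1);(3,true,0)]);
([0;2;0;3],[2;0],[(6,false,0);(2,true,2)]);
([2;0;0;2;0],[0;2;0;0;2],[(6,false,2);(6,true,0)]);
([0;0;2;0;0],[2;2;2;2],[(6,false,1);(6,false,0);(5,true,1)]);
([2;2;2;1],[0;2;2],[(5,false,0);(0,true,3)]);
([2;2;2;2;2;0],[0;2;2;2;2;2],[(5,false,0);(5,true,3)]);
([2;0;3],[1;2;0],[(1,false,0);(9,true,1)]);
([3;0;2;2],[2;2;1],[(12,false,1);(3,true,0)]);
([2;0;0;2;2],[0;0;0;2],[(12,false,2);(6,true,0);(6,true,1);(6,true,2);(0,true,4)]);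
([0;2;2;2;2;2;2],[0;2;0;0;0;0;0],[(11,false,3);(5,true,0);(6,true,2);(6,true,1);(6,true,0)]);
([2;1;2;0],[1;2;2],[(14,false,1);(7,false,0);(2,true,3)]);
([2;2;0;0;2],[2;0;0;0],[(7,false,0);(6,true,3);(6,true,2);(6,true,1);(1,true,0)]);
([2;2;0;0;0;2;0],[2;0;0;0;0;2],[(7,false,0);(10,true,3);(6,true,2);(6,true,1);(1,true,0)]);
([0;2;0;0;2;1],[2;0;0;2],[(6,false,0);(6,false,1);(7,false,0);(12,true,3);(6,true,2);(6,true,1);(1,true,0)]);
([3;0;2],[0;2;1],[(0,false,3);(8,true,0)]);
([2;0;0;0;2;0],[0;0;0;0;2],[(6,false,3);(10,true,0);(16,true,1)]);
([0;2;0;0;0;0;0;0],[0;0;0;0;0;0;2;0],[(6,false,0);(6,false,1);(6,false,2);(6,false,3);(11,false,0);(11,true,4);(6,true,2);(6,true,3);(6,true,4);(6,true,5)]);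
([0;0;0;0;0;0;0;2;0],[2;2;2;2;0;0;0;0],[(6,false,6);(24,false,0);(6,false,0);(6,false,1);(6,false,2);(6,false,3);(10,false,4);(13,true,0);(6,true,5);(6,true,4);(6,true,3);(6,true,2);(6,true,1);(11,true,0)]);
([2;2;2;2;2;2;2;2;2],[2;2;2;2;0;0;0;0;0],[(11,false,5);(13,true,0);(6,true,5);(6,true,4);(6,true,3);(6,true,2);(6,true,1);(11,true,0)]);
([2;2;2;2;2;2],[2;0;0;0;0;0],[(1,false,0);(17,true,1);(1,true,0)]);
([2;0;0;2;1],[1;2;0;0;2],[(1,false,0);(21,true,1)]);
([2;0;0;0;0;0;0],[0;0;0;0;0;2;0],[(1,false,0);(24,true,1);(1,true,0)]);
([3;1;2;0],[0;3],[(14,false,1);(3,true,0)]);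
([3;0;0;0;2],[0;0;2;2],[(16,false,1);(3,true,0)]);
([3;1;2;2],[1;2;0],[(18,false,1);(3,true,0)]);
([2;0;0;2],[0;0;0],[(3,false,0);(19,true,1);(3,true,0)]);
([3;0;0;0;0;2],[0;0;0;2;0],[(23,false,1);(3,true,0)]);
([0;2;0;0;3],[2;2;0],[(6,false,0);(14,true,2);(0,true,1)]);
([0;2;0;0;0;0;2;0],[2;0;0;0;0;0;2],[(6,false,0);(23,true,2)]);
([0;2;0;0;0;0;2],[2;2;0;0;0;0],[(23,false,2);(5,true,0);(33,true,2)]);
([2;2;0;0;0;0;2;2;2;2],[0;0;0;0;2;2;2;2;0;0],[(11,false,6);(6,false,7);(29,false,2);(5,false,0);(25,true,3);(13,true,2);(6,true,1);(6,true,2);(6,true,3);(6,true,4);(6,true,5);(11,true,4)]);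
([2;2;0;0;3],[1;2;1;2;2],[(7,false,0);(14,true,3);(18,true,2)]);
([1;2;2;1;2;2],[2;2;2;0],[(18,false,3);(7,true,0);(0,true,2)]);
([2;2;0;0;0;0;2;0],[1;2;2;0;0;0;0;2],[(7,false,0);(23,true,3)]);
([0;2;0;0;0;0;0],[0;0;0;0;0;0;2],[(6,false,0);(6,false,1);(6,false,2);(6,false,3);(11,false,0);(23,true,2)]);
([2;0;0;0;0;2;2;2;2;0;0],[0;0;0;0;2;2;2;2;0;0;0],[(38,false,1);(11,false,7);(6,false,8);(29,false,3);(11,false,0);(25,true,4);(6,true,2);(6,true,3);(6,true,4);(6,true,5);(11,true,4)]);
([2;2;2;2;0;0;0;0;0;2;0],[0;0;0;0;0;0;2;2;2;2;2],[(11,false,0);(25,true,3);(13,true,2);(13,true,3);(13,true,4);(13,true,5)]);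
([2;2;1;2;2],[0;2;2;2;0],[(18,false,2);(12,true,0)]);
([2;2;2;2;0;0;0;0;2],[0;2;2;2;2;0;0;0;0],[(23,false,4);(13,true,0);(13,true,1);(6,true,6);(6,true,5);(6,true,4);(6,true,3);(6,true,2);(11,true,1)]);
([0;0;0;0;0;2;2;2;2;0;0;0;0],[2;2;0;0;0;0;2;2;2;0;0;0],[(11,false,5);(6,false,6);(6,false,7);(6,false,8);(6,false,9);(6,false,10);(13,false,5);(13,false,4);(13,false,3);(13,false,2);(13,false,1);(13,false,0);(25,true,5);(13,true,4);(6,true,3);(6,true,2);(6,true,1);(6,true,0);(37,true,0)]);
([1;2;2;1],[2;1;2],[(18,false,0);(0,true,3)]);
([0;2;0;0;0;2],[2;0;0;0;0],[(6,false,0);(6,false,1);(6,false,2);(7,false,1);(11,false,3);(18,true,0);(6,true,2);(6,true,1);(1,true,0)]);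
([2;1;1;2;0],[1;2],[(14,false,2);(18,true,0);(2,true,2)]);
([1;2;0;0;0;0],[2;0;0;0;2],[(33,false,2);(18,false,0);(23,true,2);(1,true,1)]);
([2;0;0;0;2;2;2;2;2],[0;0;0;2;2;2;2;0],[(51,false,0);(11,false,6);(6,false,7);(29,false,2);(18,false,0);(25,true,3);(7,true,1);(6,true,2);(6,true,1);(6,true,0);(11,true,3);(6,true,1);(6,true,2);(6,true,3);(6,true,4);(11,true,3)]);
([0;2;1;3],[3;0],[(22,false,0);(2,true,2)]);
([3;0;0;2;0],[0;2;2],[(6,false,2);(22,true,0);(1,true,2)]);
([3;0;0;2;2],[0;2;2;1;2],[(12,false,2);(22,true,0);(48,true,2)]);
([3;0;0;0;0;0;2],[0;0;0;0;0],[(23,false,2);(22,true,0);(1,true,2);(33,true,1)]);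
([0;0;0;0;2;1],[2;0;0;0;2],[(23,false,0);(0,true,5)]);
([2;0;0;0;0;2;0],[0;0;0;0;2;2],[(6,false,4);(23,true,0)]);
([2;0;0;0;2;2;2;2],[0;0;0;0;2;2;2;0],[(5,false,5);(23,true,0)]);
([0;0;0;2;2;2;2;0;0;0;0;0],[0;2;2;2;2;0;0;0;2;2;2],[(46,false,2);(11,false,2);(23,false,0);(25,true,5);(13,true,4);(13,true,5);(13,true,6);(13,true,7);(29,true,0);(11,true,3);(27,true,3);(11,true,1)]);
([0;0;0;0;0;0;0;2],[2;2;2;2;0;0;0],[(0,false,8);(25,true,0);(0,true,7)]);
([0;2;1;2],[2;2;1],[(48,false,1);(0,true,0)]);
([2;0;0;3],[1;2;2;0],[(1,false,0);(35,true,1)]);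
([1;2;2;0;0;0;0],[2;0;0;0;0;2],[(37,false,1);(1,true,0)]);
([2;0;0;0;0;0],[0;0;0;0;0;2],[(1,false,0);(42,true,1);(1,true,0)]);
([2;1;3],[1;3;0],[(1,false,0);(53,true,1)]);
([1;2;0;0;0;2],[0;0;0;2;1],[(57,false,1);(1,true,0)]);
([2;2;2;2;2],[0;0;0;0;0],[(3,false,0);(27,true,1);(3,true,0)]);
([3;0;0;0],[0;0;2],[(33,false,1);(3,true,0)]);
([2;0;0;0;0;2;2;2;2],[0;0;0;0;2;2;2;2;0],[(3,false,0);(38,true,1);(69,true,0);(6,true,2);(6,true,3);(6,true,4);(6,true,5);(11,true,4)]);
([1;1;2;0],[3;1;2],[(3,false,0);(50,true,1)]);
([0;0;0;0;0;0;2;2],[2;2;2;0;0;0;0],[(65,false,1);(6,false,0);(37,true,1)]);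
([0;0;2;2;2;2;0;0;0;2],[0;0;0;2;2;2;0;0;0;0],[(11,false,2);(6,false,3);(6,false,2);(6,false,1);(6,false,0);(46,true,2);(33,true,0)]);
([0;0;0;0;0;2;2;2;2;0],[2;2;0;0;0;0;2;2;2],[(65,false,0);(59,false,2);(6,true,0);(37,true,0)]);
([2;2;2;2;0;0;0;2],[0;2;2;2;0;0;0;0],[(5,false,0);(49,true,3)]);
([2;2;2;0;0;0;2;1],[0;2;2;2;0;0;0;2],[(5,false,0);(57,true,3)]);
([2;2;0;0;0;2],[1;2;2;0;0;0],[(7,false,0);(33,true,3)]);
([2;1;1;2;2;0;0;0],[1;1;2;2;0;0],[(77,false,2);(57,false,3);(18,true,0);(77,true,1);(0,true,6)]);
([2;0;0;0;2;2;2;0],[0;0;2;2;1;2],[(1,false,1);(59,false,2);(18,true,0);(33,true,2);(67,true,0);(62,true,2)]);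
([0;0;2;2;2;0;0],[2;2;1;1;2;2],[(45,false,1);(55,false,0);(45,false,2);(22,true,0);(62,true,0)]);
([3;1;2],[0;3;1],[(0,false,3);(30,true,0)]);
([0;0;0;3],[2;0;0],[(33,false,0);(2,true,3)]);
([2;0;0;0;2;2],[0;0;0;2;2;1],[(12,false,3);(33,true,0)]);
([2;2;0;0;0;0;2;2;1],[2;2;2;0;0;0;0;2],[(37,false,0);(12,true,6);(65,true,1);(72,true,0)]);
([0;0;0;0;0;0;0;0;0;0;0;0;0;0;0],[0;0;0;0;0],[(68,false,6);(65,false,1);(46,false,6);(37,true,0);(80,true,4);(33,true,1);(33,true,8);(71,true,5);(2,true,4);(0,true,3);(11,true,1);(68,true,0)]);
([2;2;1;2;1;2;2],[0;2;2;2;2;0],[(18,false,4);(45,true,0);(0,true,4)]);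
([2;1;2;2;0],[1;2;1;2;2],[(48,false,0);(18,true,2)]);
([2;0;0;0;0;2;2;1],[2;2;0;0;0;0;2],[(49,false,0);(12,true,5);(37,true,0)]);
([2;0;0;0;2;1;1;2;2;0;0],[2;2;2;2],[(33,false,1);(80,false,4);(37,false,0);(46,false,5);(49,true,0);(80,true,3);(33,true,0);(33,true,7);(71,true,4);(2,true,3);(0,true,2);(11,true,0)]);
([2;0;0;0;2;1],[1;2;0;0;0],[(51,false,0);(0,true,5)]);
([1;1;2;2;0;0;0],[0;0;0;2;2;1;1],[(77,false,1);(57,false,2);(51,true,0);(83,true,0)]);
([3;0;0;2],[0;2;2;1],[(0,false,4);(54,true,0)]);
([0;0;0;0;2;2;1;2],[2;0;0;0;0;2;2],[(48,false,5);(57,true,0);(12,true,4)]);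
([0;0;0;0;2;2;1],[2;0;0;0;0;2],[(58,false,0);(0,true,6)]);
([0;0;0;2;1;1;2;2;0;0],[2;2;2],[(33,false,0);(80,false,3);(37,false,6);(58,true,0);(80,true,2);(33,true,7);(71,true,4);(2,true,3);(18,true,2);(0,true,1);(5,true,0)]);
([0;0;3;1],[1;2;0],[(81,false,1);(71,false,1);(0,true,0)]);
([2;1;2;1;2;2],[0;2;2;2;0;0],[(48,false,0);(80,false,1);(1,true,0)]);
([1;2;0;0],[0;0;3],[(82,false,1);(1,true,0)]);
([0;0;0;0;0;0;0;0;0;0;0;0;0;0],[0;0;0;0],[(1,false,0);(85,true,1);(1,true,0)]);
([0;0;2;1;1;2;2;0;0],[2;2;0],[(1,false,0);(95,true,1);(7,true,0)]);
([3;1;3;0],[1;3],[(66,false,1);(3,true,0)]);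
([2;0;0;0;2],[0;0;3;0;0],[(3,false,0);(77,true,1);(81,true,0);(81,true,1);(1,true,3)]);
([0;3;1;1;2;2],[1;2;2;0],[(81,false,0);(87,false,1);(3,true,0)]);
([2;2;0;0;0;0;2;2;2;0],[3;0;0],[(37,false,0);(70,false,2);(5,true,0);(102,true,2);(63,true,1);(87,true,0);(33,true,4);(18,true,1);(33,true,3);(71,true,0);(33,true,2);(1,true,1)]);
([0;2;2;2;0;0;0;0;2],[1;1;2;2;0],[(94,false,3);(5,true,0);(102,true,2);(63,true,1);(87,true,0);(33,true,4);(0,true,6);(18,true,1)]);
([2;2;1;1;2;2;0;0],[1;1;2;2],[(80,false,0);(45,false,1);(12,false,0);(91,true,3);(102,true,2);(63,true,1);(87,true,0);(33,true,4);(0,true,6);(0,true,5);(18,true,1)]);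
([2;1;1;2;2;0],[1;1;2;2],[(63,false,2);(18,true,0);(14,true,2);(18,true,1)]);
([0;0;0;2;2;1;1;2;1],[2;2;0;0;0;0;2;2],[(91,false,0);(63,false,1);(102,false,2);(18,false,0);(94,true,3);(64,true,1)]);
([0;2;1;1;2],[2;1],[(22,false,0);(62,true,1);(3,true,0)]);
([0;2;1;1;3],[3;3;0],[(22,false,0);(66,true,2);(0,true,1)]);
([0;0;0;0;0;2;2;2;0],[2;0;0;0;0;2;2;2],[(68,false,0);(11,false,0);(69,false,0);(70,false,2);(22,true,0);(1,true,2);(102,true,1);(82,true,0)]);
([2;2;1;1;2;1;2;2],[0;2;2;2;2;0;0],[(87,false,3);(63,false,4);(45,true,0);(82,true,4)]);
([2;2;1;1;3;0;0],[0;2;2],[(66,false,3);(66,false,4);(45,true,0);(0,true,4);(2,true,3)]);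
([1;1;3;0;0],[2;1],[(66,false,1);(66,false,2);(48,true,0);(2,true,2)]);
([2;1;1;2;2],[1;2;1;2],[(18,false,2);(48,false,0);(71,true,3);(2,true,2)]);
([2;1;1;1;1;2;1;2;2],[2;2;2;0;0;0;0;2],[(87,false,4);(87,false,3);(87,false,2);(48,false,0);(91,true,3);(102,true,2);(63,true,1);(91,true,0);(108,true,0);(94,true,2)]);
([0;0;0;0;0;0;0;0;0;0;0;0],[0;0],[(68,false,7);(61,true,0);(102,true,3);(63,true,2);(45,true,0);(105,true,0);(6,true,3);(6,true,2);(1,true,1);(33,true,1);(1,true,0)]);
([1;3;0;0],[0;2;1],[(66,false,0);(66,false,1);(62,false,0);(2,true,3)]);
([2;2;1;2;1],[0;2;2;1;2],[(62,false,0);(48,true,2)]);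
([2;2;1;1;3],[3;3;0;0],[(62,false,0);(66,true,3);(110,true,0)]);
([2;0;0;0;0;2;2;2;0],[0;0;2;2;1;1;2],[(82,false,0);(102,false,1);(1,false,2);(70,false,3);(62,true,0);(1,true,2);(102,true,1);(63,true,0);(102,true,2);(63,true,1);(91,true,0);(115,true,4);(62,true,2)]);
([0;0;0;0;2;2;2;2;0;0;0],[0;0;0;2;1;1;1;2;2],[(70,false,0);(64,false,0);(80,true,5);(33,true,2);(98,true,0);(22,true,2)]);
([0;0;0;0;0;0;0;0;0;0;0],[2;2;2;0;0;0;0;2;2;2],[(68,false,5);(65,false,0);(74,true,1)]);
([0;0;0;2;2;1;1;1;2;2],[0;0;2;1],[(92,false,2);(102,false,0);(80,false,4);(65,true,0);(74,true,0);(121,true,1);(33,true,0);(109,true,2)]);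
([0;0;2;1],[3;0;0],[(69,false,0);(0,true,3)]);
([0;2;2;1;1;2;1;2],[0;0;0;2;2;2;2;0],[(115,false,4);(92,false,0);(80,false,3);(69,true,0);(6,true,2);(6,true,3);(6,true,4);(11,true,3)]);
([0;0;2;2;2;2;0;0],[2;2;1;1;1;2;2],[(69,false,0);(80,true,2);(22,true,0);(62,true,0)]);
([0;3;1;1],[1;1;2],[(81,false,0);(71,false,0);(0,true,3)]);
([1;1;1;2;2;0],[3;0;3;1],[(63,false,2);(71,true,0);(14,true,2);(71,true,1);(81,true,1)]);
([3;1;1;2;2;0],[1;1;2;2;0;0],[(63,false,2);(71,false,0);(82,true,3)]);
([0;0;0;2;2;1;1;2],[0;0;2;2;1;1],[(91,false,0);(63,false,1);(102,false,2);(63,false,0);(102,false,1);(33,false,2);(11,false,5);(72,false,0);(80,true,4);(94,true,0);(62,true,4);(102,true,0);(62,true,4);(22,true,2);(62,true,2)]);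
([2;2;1;1;1;2;1;2;2],[0;2;2;2;2;0;0;0],[(87,false,4);(63,false,5);(80,false,0);(82,true,6);(6,true,4);(6,true,3);(6,true,2);(11,true,1)]);
([2;2;2;0;0;0;0;2;2;2],[0],[(5,false,0);(65,false,3);(65,false,4);(11,false,1);(6,false,2);(6,false,3);(6,false,4);(94,false,6);(80,true,0);(91,true,2);(48,true,8);(102,true,1);(62,true,5);(22,true,3);(62,true,3);(33,true,0);(125,true,1);(0,true,3);(0,true,2);(3,true,1)]);
([0;3;1;3],[3;1],[(81,false,0);(2,true,2)]);
([3;0;3;1],[0;3;3],[(81,false,1);(71,false,1);(14,false,2);(81,true,0);(1,true,2)]);
([3;1;1;2;2],[0;0;3;3],[(18,false,2);(81,true,0);(71,true,2);(81,true,2);(135,true,1)]);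
([0;0;3;3;0],[0;3;0;3],[(136,false,0);(63,false,2);(81,true,0);(1,true,2)]);
([3;1;1;3;0],[1;1],[(66,false,2);(81,true,0);(128,true,0);(2,true,2)]);
([3;1;1;2;1;2;2],[1;2;2;0;0],[(87,false,2);(81,true,0);(128,true,0);(7,true,1)]);
([2;1;1;2;1;2;2],[1;1;2;1;2],[(87,false,2);(63,false,3);(87,true,0);(14,true,4);(18,true,3);(115,true,1)]);
([1;1;1;1;2;1;2;2],[2;2;0;0;0;0;2],[(87,false,3);(87,false,2);(87,false,1);(87,false,0);(64,true,1)]);
([2;2;2;0;0;0],[1;1;1;2;1;2],[(7,false,1);(82,false,4);(87,true,0);(63,true,4);(87,true,3);(140,true,1)]);
([0;0;0;0;0;2;2;2;2],[3],[(65,false,0);(65,false,1);(65,false,2);(7,false,1);(94,false,4);(87,true,0);(87,true,1);(33,true,5);(18,true,2);(33,true,4);(0,true,6);(71,true,1);(81,true,1);(1,true,0);(1,true,1)]);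
([0;0;0;2;2;1;1;1],[1;1;2;2;0;0],[(91,false,0);(0,true,6)]);
([0;2;2;1;1;2],[2;2;1;1],[(92,false,0);(62,true,2);(22,true,0);(62,true,0)]);
([0;3;3;0;0],[3;0;3;0],[(120,false,1);(92,false,0);(66,true,3);(0,true,2)]);
([1;1;2;2;0],[0;0;3;3],[(0,false,0);(129,true,1);(135,true,1)]);
([2;1;1;2],[1;2;1],[(1,false,0);(109,true,1)]);
([2;1;1;3],[1;3;3;0],[(1,false,0);(110,true,1)]);
([0;2;2;2;2;0;0],[1;1;2;1],[(1,false,0);(127,true,1);(48,true,0);(148,true,2);(148,true,0);(148,true,1)]);
([1;1;1;2],[3;1;1],[(128,false,1);(1,true,0)]);
([3;1;3],[1;3;1],[(1,false,0);(134,true,1)]);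
([0;3;3;0],[3;0;3],[(1,false,0);(137,true,1);(1,true,0)]);
([0;0;0;0;2;2;2;2],[1;3],[(1,false,0);(143,true,1)]);
([0;0;2;2;1;1;1],[3;0;3],[(1,false,0);(144,true,1);(147,true,1);(1,true,0);(153,true,0)]);
([1;1;3;0],[2;1;1],[(2,false,0);(138,true,1)]);
([3;0;0;3;0;0],[0;0;0;2],[(102,false,1);(3,true,0)]);
([3;3;3;1;1],[2;2;0;0;0],[(151,false,2);(151,false,1);(142,false,1);(3,true,0)]);
([2;2;0;0;0;0;2],[1;3;3;1;1;2],[(7,false,0);(102,true,3);(63,true,2);(87,true,1);(87,true,2);(87,true,3);(151,true,1);(151,true,2)]);
([0;0;0;0;0;0;0],[1;1;1],[(68,false,1);(11,false,2);(6,false,0);(6,false,1);(7,false,0);(142,true,3);(48,true,0);(148,true,2);(148,true,0);(151,true,2);(2,true,1)]);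
([0;0;0;0;0;0;2],[1;3;1;1],[(65,false,1);(6,false,0);(6,false,1);(7,false,0);(142,true,2);(151,true,2);(2,true,1);(151,true,1)]);
([2;2;0;0;0;0],[1;3;3;1;1],[(7,false,0);(142,true,1);(151,true,1);(151,true,2)]);
([0;0;0;2;2;1;1],[0;3;0;3;0],[(92,false,2);(102,false,0);(62,false,4);(94,false,0);(121,false,2);(11,true,0);(33,true,3);(5,true,5);(33,true,2);(102,true,1);(63,true,0);(102,true,2);(63,true,1);(147,true,0);(153,true,1)]);
([0;0;0;2;2;2;0],[2;1;2;1;1],[(45,false,2);(119,false,1);(92,false,0);(119,false,2);(22,true,0);(62,true,0);(148,true,1)]);
([3;1;1;2;1;2],[1;1;2;1;2;2],[(0,false,1);(142,false,2);(22,true,0);(62,true,0);(18,true,1);(87,true,0);(87,true,1)]);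
([0;0;0;2;2;2;2;0],[2;1;1],[(11,false,3);(68,false,0);(142,true,3);(12,true,0);(148,true,2);(62,true,0);(151,true,2);(2,true,1)]);
([3;0;3;0;0],[0;0;2;2;1],[(125,false,2);(69,true,0)]);
([0;0;2;2;2;2;0],[1;2;1;1],[(0,false,5);(96,false,6);(80,true,0);(14,true,5);(0,true,7);(148,true,1);(148,true,2);(148,true,0)]);
([2;1;2;1;1;1],[0;0;0;2;2;2],[(148,false,1);(2,false,5);(80,false,0);(128,true,6);(0,true,5);(12,true,2)]);
([3;0;0;3],[0;3;0],[(98,false,1);(81,true,0);(1,true,2)]);
([1;1;3;1;1;1],[2;0;0;0;0],[(152,false,1);(152,false,0);(151,false,3);(151,false,2);(142,false,2);(81,true,0);(81,true,1);(81,true,2);(1,true,4);(82,true,0)]);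
([1;2;1;2;1;2],[0;2;2;2;0;0],[(0,false,6);(14,false,4);(87,false,0);(96,true,4);(18,true,3);(97,true,0)]);
([1;2;1;2;1;1],[0;0;2;2;2;0],[(2,false,4);(87,false,0);(128,true,4);(48,true,1);(119,true,0);(45,true,1)]);
([0;2;2;1;1],[3;3;0;0],[(92,false,0);(125,true,1)]);
([0;0;0;0;2;2;2],[1;3;3],[(5,false,4);(68,false,0);(11,false,0);(5,false,5);(6,false,1);(6,false,2);(6,false,3);(5,false,5);(97,false,0);(142,true,5);(151,true,5);(2,true,4);(151,true,4);(66,true,2);(0,true,4);(149,true,0);(0,true,3)]);
([1;2;2;0;0],[0;0;3;0;3],[(82,false,2);(98,true,0)]);
([2;0;0;0;0;2;2],[1;1;3;3;1;1;2],[(94,false,0);(119,false,3);(92,false,2);(98,false,0);(94,true,2);(162,true,1)]);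
([0;0;3;3;1],[1;1;2;2],[(98,false,0);(96,true,2);(18,true,1)]);
([0;2;1;1],[1;3;0],[(118,false,0);(0,true,3)]);
([1;3;3;0;0],[2;2;1;1],[(125,false,2);(118,true,0);(62,true,0)]);
([3;1;1;2],[0;3;3;1],[(151,false,0);(18,false,2);(128,false,0);(71,true,3);(81,true,3);(1,true,2)]);
([0;3;3;3;0;0],[3;3;0],[(135,false,0);(118,true,3);(22,true,2);(92,true,0);(174,true,0);(0,true,3)]);
([3;3;1;1;1],[2;2;2;0;0],[(151,false,1);(151,false,0);(142,false,0);(0,true,5)]);
([2;1;2;1;1],[1;1;3;3;0],[(164,false,0);(5,false,3);(33,false,1);(5,false,4);(6,false,0);(6,false,1);(6,false,2);(5,false,4);(37,false,5);(142,true,0);(87,true,3);(87,true,4);(33,true,8);(18,true,5);(147,true,4);(1,true,3);(1,true,2)]);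
([0;0;0;0;0;2;2],[1;3;3;1],[(68,false,0);(11,false,3);(82,false,5);(142,true,0);(18,true,3);(14,true,5);(18,true,4);(151,true,2);(181,true,2);(1,true,1)]);
([2;2;2;2;0;0],[3;1;1;1],[(82,false,3);(142,true,0);(2,true,5);(151,true,0)]);
([0;2;0;0;0;0],[1;3;1;1;1],[(6,false,0);(6,false,1);(6,false,2);(0,false,4);(96,false,5);(142,true,0);(14,true,5);(0,true,7);(148,true,3);(151,true,1)]);
([3;1;1;1;1],[2;2;2;2;0],[(151,false,0);(2,false,5);(142,false,0);(96,true,4);(0,true,3)]);
([1;3;0;3],[3;3;0],[(153,false,1);(1,true,0)]);
([0;0;0;0;0;0],[1;1;1;1],[(1,false,0);(160,true,1)]);
([1;1;1;3;3;0],[0;0;2;2;2;0],[(184,false,1);(164,false,1);(1,true,0)]);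
([0;2;2;2;2;0],[1;1;2;1;1],[(1,false,0);(168,true,1)]);
([0;0;0;2;2;2],[1;1;3;3],[(1,false,0);(175,true,1)]);
([3;3;3;0;0],[1;3;3;0],[(1,false,0);(182,true,1)]);
([0;0;0;0;2;2],[1;1;3;3;1],[(1,false,0);(185,true,1)]);
([3;1;1;3;3;0],[1;2;1;1],[(184,false,1);(3,true,0)]);
([0;0;2;2;2;2],[1;2;1;1;1],[(11,false,2);(6,false,3);(6,false,2);(6,false,1);(5,false,3);(6,false,0);(6,false,1);(7,false,0);(186,true,3);(2,true,2)]);
([3;3;3;0],[1;3;3],[(0,false,1);(149,false,2);(22,true,0);(179,true,0);(0,true,2)]);
([2;2;1;1;1],[1;3;3;0],[(62,false,0);(22,false,0);(174,true,1);(198,true,0)]);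
([2;1;1;1],[1;1;3],[(0,false,0);(148,false,1);(22,false,0);(184,true,2);(0,true,1);(152,true,0);(152,true,1);(1,true,3)]);
([1;1;2;1;2],[0;3;3;1;1],[(0,false,0);(142,false,1);(7,false,2);(22,false,0);(186,true,2);(128,true,1);(181,true,0)]);
([2;1;2;1;2],[1;2;1;2;1],[(48,false,0);(148,true,2)]);
([1;1;3;3;0;3;0],[0;2;2;1;2],[(149,false,1);(184,false,2);(48,true,0);(48,true,1);(119,true,0)]);
([3;3;0;3;0],[1;3;3;0;3],[(0,false,0);(149,false,1);(149,false,3);(62,true,0);(200,true,1);(149,true,0)]);
([3;0;3;0;3;0],[0;0;0;2;2;1],[(153,false,2);(174,false,3);(69,true,0);(12,true,2)]);
([1;1;1;3;1;1],[0;0;0;0;2],[(0,false,4);(66,false,2);(187,false,3);(71,true,0);(81,true,0);(81,true,1);(1,true,3);(69,true,2)]);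
([3;1;1;3;3;1;1],[0;0;0;0;2],[(162,false,2);(81,true,0);(81,true,1);(1,true,3);(69,true,2)]);
([3;0;3;3;1;1],[0;3;0;3;3;1],[(0,false,2);(162,false,3);(92,true,0);(18,true,2);(62,true,0);(18,true,1);(87,true,0);(87,true,1);(201,true,0);(181,true,2)]);
([0;0;0;2;2;1;2],[1;3;3;0;3],[(119,false,2);(119,false,1);(92,false,0);(174,true,2);(153,true,1);(204,true,0)]);
([0;0;3;0;3;3;1],[1;2;1;2;2],[(98,false,0);(178,true,3);(0,true,2)]);
([0;0;3;3;3;1],[0;3;3;1;1],[(98,false,0);(178,true,2);(148,true,1);(201,true,0)]);
([1;1;3;3;0;3],[0;0;2;2;1;2],[(204,false,1);(153,false,2);(174,false,3);(118,true,0);(48,true,2);(119,true,1)]);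
([3;0;3;3;1],[0;3;0;3;3],[(181,false,1);(151,false,1);(151,false,0);(87,false,2);(128,false,0);(147,true,3);(1,true,2)]);
([1;1;1;1;1],[0;0;0;0;0],[(2,false,2);(128,false,0);(171,true,2);(3,true,1)]);
([0;3;0;3;0;3],[0;0;3;0;3;0],[(1,false,2);(176,false,3);(128,true,0);(7,true,1);(176,true,0)]);
([0;3;3;3],[3;3;1],[(135,false,0);(152,true,2);(0,true,1)]);
([3;1;1;3;1;1],[0;0;0;0;0],[(151,false,3);(151,false,0);(0,false,8);(14,false,6);(14,false,5);(142,false,0);(178,true,5);(0,true,4);(0,true,3);(68,true,0)]);
([1;1;1;1;3],[0;2;2;2;2],[(0,false,5);(66,false,3);(2,false,5);(142,false,0);(178,true,4);(0,true,3);(12,true,0)]);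
([1;1;1;3;3;1;1],[0;0;0;2;2;1],[(162,false,2);(147,true,0);(69,true,3);(92,true,2)]);
([0;0;0;0;2;0],[1;1;1;3;1],[(69,false,2);(3,false,3);(147,false,0);(187,true,4);(48,true,1);(2,true,3);(200,true,1)]);
([1;1;1;3;3],[0;0;2;2;2],[(200,false,1);(148,false,0);(149,true,3);(191,true,1);(33,true,0);(5,true,2)]);
([1;1;3;3;1],[1;3;3;3],[(200,false,0);(152,false,3);(149,true,0);(0,true,3)]);
([3;1;1;3],[1;1;1],[(151,false,0);(2,true,3)]);
([3;1;1;1;3],[1;1;2;1;1],[(151,false,0);(66,true,3);(156,true,2)]);
([1;3;3;1],[3;3;3],[(1,false,2);(152,false,0);(135,true,2);(1,true,1)]);
([3;0;3;0;3],[0;3;0;3;0],[(153,false,0);(170,true,2)]);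
([3;3;3;3;1],[2;0;0;0;0],[(1,false,3);(81,false,4);(71,false,4);(158,true,0);(0,true,4);(33,true,1)]);
([3;3;0;3;3],[1;3;3;3;1],[(135,false,2);(81,false,3);(71,false,3);(158,true,0);(102,true,1);(63,true,0);(162,true,1);(225,true,1)]);
([1;3;3;3;3],[0;0;0;0;2],[(198,false,0);(1,false,3);(147,false,4);(158,true,0);(0,true,4);(5,true,3);(6,true,1);(6,true,0);(33,true,1)]);
([1;1;3;3;3;1],[0;0;0;2;2;1],[(228,false,1);(204,false,0);(170,false,2);(147,false,3);(158,true,0);(5,true,4);(33,true,1);(102,true,0);(92,true,2)]);
([1;1;3;3;3],[0;0;0;2;2],[(198,false,1);(198,false,0);(1,false,3);(176,false,4);(158,true,0);(5,true,4);(33,true,1);(5,true,3);(33,true,0)]);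
([0;0;0;0;0;2],[1;1;3;1;1],[(68,false,0);(11,false,2);(82,false,4);(162,true,0);(1,true,4);(152,true,2);(152,true,1)]);
([2;0;0;0;0;2],[1;3;3;3;1],[(171,false,0);(151,true,3);(225,true,1)]);
([1;1;3;1;1],[3;3;3;3],[(232,false,0);(69,false,3);(102,false,1);(6,false,0);(6,false,1);(6,false,2);(0,false,4);(183,false,0);(147,true,4);(1,true,3);(1,true,2)]);
([3;3;3;3;3;3;3],[2;2;2],[(234,false,3);(158,true,0);(82,true,2);(0,true,4);(0,true,3)]);
([3;3;3;3;3],[0;0;0;0;0],[(234,false,1);(223,true,0);(214,true,0)]);
([0;0;0;0;0;0;0;0;0;0],[],[(190,true,0);(1,true,3);(1,true,2);(1,true,1);(1,true,0)]);
([0;0;0;0;0],[2;1;2;1;2;1;2;1;2;1],[(214,false,0);(2,false,2);(151,false,3);(148,false,1);(148,false,3);(202,false,0)]);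
([2;2;2;2;2],[0;3;0;3;0;3;0;3;0;3],[(68,true,0);(2,false,5);(69,false,3);(0,false,3);(66,false,4);(66,false,5);(167,false,2);(226,false,1)]);
([0;0;0;0;0;0;0;0;0;0],[0;0;0;0;0;2;2;2;2;2],[(190,true,0);(1,true,3);(1,true,2);(1,true,1);(1,true,0);(1,false,0);(1,false,1);(1,false,2);(1,false,3);(190,false,0);(68,false,5)]);
([0;0;0;0;0;2;2;2;2;2],[],[(68,true,5);(190,true,0);(1,true,3);(1,true,2);(1,true,1);(1,true,0)])].

Lemma inv_of {T} (G : Group T) x y : gmul G x y = gone G -> x = ginv G y.
Proof.
  intros H. rewrite <- (mul1_r G x), <- (mulV_r G y), gmulA, H, gmul1. reflexivity.
Qed.

Ltac vb Hrel :=
  let H1 := fresh in let H2 := fresh in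
  destruct Hrel as [H1 H2]; unfold gpow in H2; simpl in H2;
  intros j l r Hj;
  destruct j as [|[|[|[|[|[|j]]]]]]; simpl in Hj;
  try (destruct j; discriminate);
  injection Hj as <- <-; simpl;
  rewrite ?mul1_r, ?mulV_r, ?gmulV, ?gmulA in *; auto.

Ltac getH HV k u v :=
  let H := fresh "H" in
  pose proof (HV k u v ltac:(vm_compute; reflexivity)) as H;
  rewrite ?ev_app, <- ?gpow_ev in H; cbn [ev lt_] in H; rewrite ?mul1_r in H.

Theorem mainTheorem6 (n : nat) (Hn : n = 3 \/ n = 4 \/ n = 5)
  (T : Type) (G : Group T) (a b : T) (Hrel : Dbar_rel G n a b) :
  gpow G a (2 * n) = gone G /\
  (n = 3 -> gpow G a 3 = ginv G (gpow G (gmul G a b) 3) /\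
            ginv G (gpow G (gmul G a b) 3) = gpow G (gmul G a b) 3) /\
  (n = 4 -> gpow G a 4 = ginv G (gpow G a 4)) /\
  (n = 5 -> gpow G a 5 = gpow G (gmul G b (ginv G a)) 5 /\
            gpow G b 5 = gpow G (gmul G a (ginv G b)) 5 /\
            gpow G a 10 = gmul G (gpow G a 5) (gpow G b 5) /\
            gmul G (gpow G a 5) (gpow G b 5) = gone G).
Proof.
  destruct Hn as [-> | [-> | ->]].
  - assert (VB : Valid G a b base3) by vb Hrel.
    pose proof (check_sound G a b rules3 base3 VB ltac:(vm_compute; reflexivity)) as HV.
    getH HV 61 (repeat 0 6) (@nil nat).
    getH HV 62 (concat (repeat [0] 3) ++ concat (repeat [0;2] 3)) (@nil nat).
    getH HV 63 (concat (repeat [0;2] 3) ++ concat (repeat [0;2] 3)) (@nil nat).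
    repeat split; try discriminate.
    + exact H.
    + try intros _. apply inv_of. exact H0.
    + try intros _. symmetry. apply inv_of. exact H1.
  - assert (VB : Valid G a b base4) by vb Hrel.
    pose proof (check_sound G a b rules4 base4 VB ltac:(vm_compute; reflexivity)) as HV.
    getH HV 130 (repeat 0 8) (@nil nat).
    getH HV 130 (concat (repeat [0] 4) ++ concat (repeat [0] 4)) (@nil nat).
    repeat split; try discriminate.
    + exact H.
    + try intros _. apply inv_of. exact H0.
  - assert (VB : Valid G a b base5) by vb Hrel.
    pose proof (check_sound G a b rules5 base5 VB ltac:(vm_compute; reflexivity)) as HV.
    getH HV 237 (repeat 0 10) (@nil nat).
    getH HV 238 (concat (repeat [0] 5)) (concat (repeat [2;1] 5)).
    getH HV 239 (concat (repeat [2] 5)) (concat (repeat [0;3] 5)).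
    getH HV 240 (repeat 0 10) (concat (repeat [0] 5) ++ concat (repeat [2] 5)).
    getH HV 241 (concat (repeat [0] 5) ++ concat (repeat [2] 5)) (@nil nat).
    repeat split; try discriminate; try intros _.
    + exact H.
    + exact H0.
    + exact H1.
    + exact H2.
    + exact H3.

Qed.
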